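(* Let $n>s\ge1$ be integers, let $t_0,\dots,t_s,t$ be independent indeterminates, $g(x)=\sum_{k=0}^s t_kx^k$ and $f(t;x)=x^n+t\,g(x)$. Let $B=(b_{ij})_{1\le i,j\le s}=M_s(g,g')$ and put $l_k=n-s+k+2$. Then $M_n(f(t;x),f'(t;x))=(\hat a_{ij}(t)+\tilde a_{ij}(t))_{1\le i,j\le n}$, where $$\hat a_{ij}(t)=\begin{cases} n & (i,j)=(1,1),\\ (s-k)t_{s-k}t & (i,j)=(1,l_k-1)\text{ or }(l_k-1,1),\ 0\le k\le s-1,\\ -(l_k-2)t_{s-k}t & i+j=l_k,\ 2\le i,j\le l_k-2,\ 0\le k\le s,\\ 0&\text{otherwise},\end{cases}$$ $$\tilde a_{ij}(t)=\begin{cases} b_{i-(n-s),\,j-(n-s)}\,t^2 & n-s+1\le i,j\le n,\\ 0&\text{otherwise}.\end{cases}$$ Here derivatives are with respect to $x$.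
   Context: Bezoutian: for polynomials $f_1,f_2$ over a field $F$ of characteristic $0$ and an integer $n\ge\max\{\deg f_1,\deg f_2\}$, write $\frac{f_1(x)f_2(y)-f_1(y)f_2(x)}{x-y}=\sum_{i,j=1}^n\alpha_{ij}x^{n-i}y^{n-j}\in F[x,y]$ and set $M_n(f_1,f_2)=(\alpha_{ij})_{1\le i,j\le n}$. Here $F=\mathbb{R}(t_0,\dots,t_s,t)$. *)

(* Defs.v *)
From HB Require Import structures.
From mathcomp Require Import all_boot all_order all_algebra.
Set Implicit Arguments. Unset Strict Implicit. Unset Printing Implicit Defensive.
Import Order.TTheory GRing.Theory Num.Theory.
Local Open Scope ring_scope.

(* Bivariate polynomials are {poly {poly F}}: the outer variable is y, the
   inner one is x.  For p : {poly F}, p%:P is p(x) and p^:P is p(y). *)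

(* (f1(x) f2(y) - f1(y) f2(x)) / (x - y) ; note x - y = -('X - x%:P). *)
Definition bezout_poly (F : fieldType) (f1 f2 : {poly F}) : {poly {poly F}} :=
  - ((f1%:P * f2^:P - f1^:P * f2%:P) %/ ('X - ('X)%:P)).

(* alpha_ij = coefficient of x^(n-i) y^(n-j), 1-based indices i, j. *)
Definition bezout_coef (F : fieldType) (n : nat) (f1 f2 : {poly F}) (i j : nat) : F :=
  ((bezout_poly f1 f2)`_(n - j))`_(n - i).

Definition bezout_mx (F : fieldType) (n : nat) (f1 f2 : {poly F}) : 'M[F]_n :=
  \matrix_(i < n, j < n) bezout_coef n f1 f2 i.+1 j.+1.

Definition mx1 (F : fieldType) (m : nat) (A : 'M[F]_m) (i j : nat) : F :=
  match @insub _ (fun k => k < m)%N 'I_m i.-1, @insub _ (fun k => k < m)%N 'I_m j.-1 with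
  | Some a, Some b => if ((0 < i) && (0 < j))%N then A a b else 0
  | _, _ => 0
  end.

Definition lk (n s k : nat) : nat := (n - s + k + 2)%N.

(* \hat a_{ij}(t), 1-based i, j.  The cases of the paper are pairwise
   disjoint and in each sum at most one summand is nonzero. *)
Definition ahat (F : fieldType) (n s : nat) (tt : nat -> F) (t : F) (i j : nat) : F :=
  if (i == 1%N) && (j == 1%N) then n%:R
  else
    \sum_(k < s)
      (if ((i == 1%N) && (j == (lk n s k).-1)) || ((i == (lk n s k).-1) && (j == 1%N))
       then (s - k)%:R * tt (s - k)%N * t else 0)
  + \sum_(k < s.+1)
      (if [&& (i + j == lk n s k)%N, (2 <= i <= (lk n s k) - 2)%N
            & (2 <= j <= (lk n s k) - 2)%N]
       then - (((lk n s k) - 2)%:R * tt (s - k)%N * t) else 0).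

Definition atilde (F : fieldType) (n s : nat) (B : 'M[F]_s) (t : F) (i j : nat) : F :=
  if [&& (n - s + 1 <= i <= n)%N & (n - s + 1 <= j <= n)%N]
  then mx1 B (i - (n - s))%N (j - (n - s))%N * t ^+ 2
  else 0.
Arguments atilde {F} n s B t i j.
Arguments ahat {F} n s tt t i j.
Arguments bezout_mx {F} n f1 f2.
Arguments bezout_coef {F} n f1 f2 i j.

(* Main.v *)
Require Import Defs.
From HB Require Import structures.
From mathcomp Require Import all_boot all_order all_algebra.
From mathcomp Require Import zify ring.
Set Implicit Arguments. Unset Strict Implicit.
Import GRing.Theory.
Local Open Scope ring_scope.

Section Bz.
Variable F : fieldType.


Definition T (f1 f2 : {poly F}) (P k : nat) : F := f1`_(P - k) * f2`_k - f1`_k * f2`_(P - k).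
Definition Cf (f1 f2 : {poly F}) (p q : nat) : F :=
  \sum_(k < (minn p q).+1) T f1 f2 (p + q + 1) k.

Lemma Cf_out (f1 f2 : {poly F}) K p q :
  (forall a, (K <= a)%N -> f1`_a = 0 /\ f2`_a = 0) ->
  (K <= (maxn p q).+1)%N -> Cf f1 f2 p q = 0.
Proof.
move=> H hK; rewrite /Cf big1 // => k _; rewrite /T.
have hk := ltn_ord k.
have [-> ->] : f1`_(p + q + 1 - k) = 0 /\ f2`_(p + q + 1 - k) = 0.
  by apply: H; lia.
by rewrite !mulr0 mul0r subrr.
Qed.

Lemma Cf_rec (f1 f2 : {poly F}) p q :
  (if p == 0%N then 0 else Cf f1 f2 p.-1 q) - (if q == 0%N then 0 else Cf f1 f2 p q.-1)
  = f1`_p * f2`_q - f1`_q * f2`_p.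
Proof.
case: p => [|p]; case: q => [|q] /=.
- by rewrite !subrr.
- by rewrite /Cf min0n big_ord1 /T sub0r subn0 add0n addn1 opprB.
- by rewrite /Cf /= subr0 minn0 big_ord1 /T /= !subn0 addn0 addn1.
have EP : (p + q.+1 + 1 = p.+1 + q + 1)%N by lia.
rewrite /Cf EP; set P := (p.+1 + q + 1)%N.
case: (ltngtP p q) => h.
- have -> : minn p q.+1 = p by lia.
  have -> : minn p.+1 q = p.+1 by lia.
  rewrite [X in _ - X]big_ord_recr /= opprD addrA subrr sub0r /T.
  have -> : (P - p.+1 = q.+1)%N by rewrite /P; lia.
  by rewrite opprB.
- have -> : minn p q.+1 = q.+1 by lia.
  have -> : minn p.+1 q = q by lia.
  rewrite [X in X - _]big_ord_recr /= addrAC subrr add0r /T.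
  by have -> : (P - q.+1 = p.+1)%N by rewrite /P; lia.
- have -> : minn p q.+1 = p by lia.
  have -> : minn p.+1 q = p by lia.
  by rewrite subrr h subrr.
Qed.

Lemma bezout_poly_Cf (f1 f2 : {poly F}) :
  bezout_poly f1 f2 =
  \poly_(q < size f1 + size f2) \poly_(p < size f1 + size f2) Cf f1 f2 p q.
Proof.
set K := (size f1 + size f2)%N.
set E := \poly_(q < K) _.
have Hout : forall a, (K <= a)%N -> f1`_a = 0 /\ f2`_a = 0.
  move=> a ha; split; apply: nth_default; apply: leq_trans ha; [exact: leq_addr | exact: leq_addl].
have cE : forall p q, E`_q`_p = Cf f1 f2 p q.
  move=> p q; rewrite coef_poly; case: ltnP => hq.
    rewrite coef_poly; case: ltnP => hp //.
    by rewrite (@Cf_out f1 f2 K p q Hout) //; lia.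
  by rewrite coef0 (@Cf_out f1 f2 K p q Hout) //; lia.
have HN : f1%:P * f2^:P - f1^:P * f2%:P = (- E) * ('X - ('X)%:P).
  apply/polyP => q; apply/polyP => p.
  rewrite mulNr mulrBr !(coefB, coefN, coefCM, coefMC, coef_map, coefMX) /=.
  rewrite -Cf_rec opprB.
  by case: p => [|p]; case: q => [|q]; rewrite /= ?coef0 ?cE.
rewrite /bezout_poly HN.
rewrite Pdiv.IdomainMonic.mulpK ?opprK //.
by rewrite monicE lead_coefDl ?lead_coefX // size_opp size_polyC size_polyX; case: eqP.
Qed.

Lemma sum_pick m (c : nat -> bool) (x : nat -> F) k0 :
  (forall k, (k < m)%N -> c k -> k = k0) ->
  \sum_(k < m) (if c k then x (val k) else 0) = if (k0 < m)%N && c k0 then x k0 else 0.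
Proof.
move=> H; case h: ((k0 < m)%N && c k0).
- move/andP: h => [hk hc].
  rewrite (bigD1 (Ordinal hk)) //= hc big1 ?addr0 // => k hk'.
  case: ifP => ck //; exfalso; move: hk'.
  by rewrite -(inj_eq val_inj) /= (H _ (ltn_ord k) ck) eqxx.
- rewrite big1 // => k _; case: ifP => ck //.
  by move: h; rewrite -(H _ (ltn_ord k) ck) ltn_ord ck.
Qed.

Lemma natmul_if (b : bool) (x : F) : b%:R * x = if b then x else 0.
Proof. by case: b; rewrite ?mul1r ?mul0r. Qed.

Lemma coef_bz (f1 f2 : {poly F}) p q :
  (\poly_(q < size f1 + size f2) \poly_(p < size f1 + size f2) Cf f1 f2 p q)`_q`_p
  = Cf f1 f2 p q.
Proof.
set K := (size f1 + size f2)%N.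
have Hout : forall a, (K <= a)%N -> f1`_a = 0 /\ f2`_a = 0.
  move=> a ha; split; apply: nth_default; apply: leq_trans ha; [exact: leq_addr | exact: leq_addl].
rewrite coef_poly; case: ltnP => hq.
  rewrite coef_poly; case: ltnP => hp //.
  by rewrite (@Cf_out f1 f2 K p q Hout) //; lia.
by rewrite coef0 (@Cf_out f1 f2 K p q Hout) //; lia.
Qed.

Lemma bezout_coef_Cf n (f1 f2 : {poly F}) i j :
  bezout_coef n f1 f2 i j = Cf f1 f2 (n - i) (n - j).
Proof. by rewrite /bezout_coef bezout_poly_Cf coef_bz. Qed.

Lemma Cf_addl (a b c : {poly F}) p q : Cf (a + b) c p q = Cf a c p q + Cf b c p q.
Proof. rewrite /Cf -big_split /=; apply: eq_bigr => k _; rewrite /T !coefD; ring. Qed.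
Lemma Cf_addr (a b c : {poly F}) p q : Cf c (a + b) p q = Cf c a p q + Cf c b p q.
Proof. rewrite /Cf -big_split /=; apply: eq_bigr => k _; rewrite /T !coefD; ring. Qed.
Lemma Cf_scalel (a c : {poly F}) (x : F) p q : Cf (x *: a) c p q = x * Cf a c p q.
Proof. rewrite /Cf mulr_sumr; apply: eq_bigr => k _; rewrite /T !coefZ; ring. Qed.
Lemma Cf_scaler (a c : {poly F}) (x : F) p q : Cf c (x *: a) p q = x * Cf c a p q.
Proof. rewrite /Cf mulr_sumr; apply: eq_bigr => k _; rewrite /T !coefZ; ring. Qed.
Lemma Cf_anti (a c : {poly F}) p q : Cf a c p q = - Cf c a p q.
Proof. rewrite /Cf -sumrN; apply: eq_bigr => k _; rewrite /T; ring. Qed.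

Lemma Cf_X m (h : {poly F}) p q :
  Cf 'X^m h p q =
  (if (m <= p + q + 1)%N && (p + q + 1 - m <= minn p q)%N then h`_(p + q + 1 - m) else 0)
  - (if (m <= minn p q)%N then h`_(p + q + 1 - m) else 0).
Proof.
rewrite /Cf /T sumrB; congr (_ - _).
- under eq_bigr => k _ do rewrite coefXn natmul_if.
  rewrite (@sum_pick _ (fun k => (p + q + 1 - k == m)%N) (fun k => h`_k) (p + q + 1 - m)).
    have -> : ((p + q + 1 - m < (minn p q).+1)%N && (p + q + 1 - (p + q + 1 - m) == m)%N)
       = ((m <= p + q + 1)%N && (p + q + 1 - m <= minn p q)%N) by apply/idP/idP; lia.
    by [].
  by move=> k hk /eqP; lia.
- under eq_bigr => k _ do rewrite coefXn natmul_if.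
  rewrite (@sum_pick _ (fun k => (k == m)%N) (fun k => h`_(p + q + 1 - k)) m).
    have -> : ((m < (minn p q).+1)%N && (m == m)%N) = (m <= minn p q)%N by apply/idP/idP; lia.
    by [].
  by move=> k hk /eqP.
Qed.
End Bz.

Lemma ahat_clean (F : fieldType) n s (tt : nat -> F) t I J :
  (1 <= s)%N -> (s < n)%N -> (1 <= I <= n)%N -> (1 <= J <= n)%N ->
  ahat n s tt t I J =
  if (I == 1%N) && (J == 1%N) then n%:R else
  (if ((I == 1%N) || (J == 1%N)) && (n + 2 <= I + J + s)%N
   then (n + 2 - (I + J))%:R * tt (n + 2 - (I + J))%N * t else 0)
  + (if [&& (2 <= I)%N, (2 <= J)%N, (I + J <= n + 2)%N & (n + 2 <= I + J + s)%N]
     then - ((I + J - 2)%:R * tt (n + 2 - (I + J))%N * t) else 0).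
Proof.
move=> hs1 hsn hI hJ; rewrite /ahat; case: ifP => h11 //.
congr (_ + _).
- rewrite (@sum_pick F _ (fun k => ((I == 1%N) && (J == (lk n s k).-1)) || ((I == (lk n s k).-1) && (J == 1%N)))
     (fun k => (s - k)%:R * tt (s - k)%N * t) (I + J - (n - s + 2))).
    rewrite /lk; case: ifPn => c1; case: ifPn => c2 //; try (exfalso; lia).
    by have -> : (s - (I + J - (n - s + 2)) = n + 2 - (I + J))%N by lia.
  by move=> k hk; rewrite /lk; lia.
- rewrite (@sum_pick F _ (fun k => [&& (I + J == lk n s k)%N, (2 <= I <= (lk n s k) - 2)%N
            & (2 <= J <= (lk n s k) - 2)%N])
     (fun k => - (((lk n s k) - 2)%:R * tt (s - k)%N * t)) (I + J - (n - s + 2))).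
    rewrite /lk; case: ifPn => c1; case: ifPn => c2 //; try (exfalso; lia).
    have -> : (s - (I + J - (n - s + 2)) = n + 2 - (I + J))%N by lia.
    by have -> : (n - s + (I + J - (n - s + 2)) + 2 - 2 = I + J - 2)%N by lia.
  by move=> k hk; rewrite /lk; lia.
Qed.

Lemma atilde_clean (F : fieldType) n s (g h : {poly F}) t I J :
  (s < n)%N -> (1 <= I <= n)%N -> (1 <= J <= n)%N ->
  (forall a, (s.+1 <= a)%N -> g`_a = 0 /\ h`_a = 0) ->
  atilde n s (bezout_mx s g h) t I J = Cf g h (n - I) (n - J) * t ^+ 2.
Proof.
move=> hsn hI hJ Hout; rewrite /atilde; case: ifPn => c.
- rewrite /mx1.
  case: insubP => [a ha ea|hn]; last by exfalso; move: hn; lia.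
  case: insubP => [b hb eb|hn]; last by exfalso; move: hn; lia.
  rewrite ifT; last by lia.
  rewrite mxE bezout_coef_Cf.
  move: ea eb; rewrite /= => ea eb.
  have -> : (s - a.+1 = n - I)%N by lia.
  by have -> : (s - b.+1 = n - J)%N by lia.
- rewrite (@Cf_out F g h s.+1) ?mul0r //; lia.
Qed.

Unset Implicit Arguments.
Theorem proposition5p4 (F : fieldType) (charF0 : [pchar F] =i pred0)
  (n s : nat) (hs1 : (1 <= s)%N) (hsn : (s < n)%N)
  (tt : nat -> F) (t : F) :
  let g : {poly F} := \sum_(k < s.+1) tt k *: 'X^k in
  let f : {poly F} := 'X^n + t *: g in
  let B : 'M[F]_s := bezout_mx s g g^`() in
  bezout_mx n f f^`() =
    \matrix_(i < n, j < n) (ahat n s tt t i.+1 j.+1 + atilde n s B t i.+1 j.+1).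
Proof.
move=> g f B.
have gE : forall k, g`_k = if (k <= s)%N then tt k else 0.
  by move=> k; rewrite /g -poly_def coef_poly ltnS.
have g'E : forall k, g^`()`_k = g`_k.+1 *+ k.+1 by move=> k; rewrite coef_deriv.
have df : f^`() = n%:R *: 'X^(n.-1) + t *: g^`().
  by rewrite /f derivD derivZ derivXn scaler_nat.
have Hout : forall a, (s.+1 <= a)%N -> g`_a = 0 /\ g^`()`_a = 0.
  move=> a ha; rewrite g'E !gE !ifF ?mul0rn //; apply/negbTE; lia.
apply/matrixP => i j; rewrite !mxE.
have hI : (1 <= i.+1 <= n)%N by rewrite ltn_ord.
have hJ : (1 <= j.+1 <= n)%N by rewrite ltn_ord.
rewrite atilde_clean // ahat_clean //.
rewrite bezout_coef_Cf df /f !(Cf_addl, Cf_addr, Cf_scalel, Cf_scaler).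
rewrite (Cf_anti g) !Cf_X.
move: hI hJ; generalize (i.+1) (j.+1) => I J hI hJ.
rewrite !coefXn !g'E !gE.
rewrite (_ : (n - I + (n - J) + 1 - n)%N = (n + 1 - (I + J))%N); last by lia.
rewrite (_ : (n - I + (n - J) + 1 - n.-1)%N = (n + 2 - (I + J))%N); last by lia.
move: (Cf g g^`() (n - I) (n - J)) => C.
repeat (first [case: ifPn => ? | case: eqP => ?]; try (exfalso; lia)).
all: rewrite ?mul0r ?mulr0 ?subr0 ?add0r ?addr0 ?sub0r ?oppr0 ?mul0rn /=.
all: try rewrite -[_ *+ _.+1]mulr_natr.
all: try (rewrite (_ : (n + 1 - (I + J)).+1 = (n + 2 - (I + J))%N); last by lia).
all: try (have -> : ((I + J - 2)%:R = n%:R - (n + 2 - (I + J))%:R :> F)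
  by rewrite -natrB; [congr (_%:R); lia | lia]).
all: try ring.
all: rewrite (_ : (n + 2 - (I + J))%N = 0%N); [ring | lia].
Qed.
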